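(* For every $\bar\tau\in(0,1)$ there exist $\bar\rho,\bar R,\bar\phi,\bar\epsilon>0$ such that the following holds. Let $p,q\in\mathbb{H}^n\setminus\{0\}$, $t,\tilde t\ge1$, $R>1$, $\epsilon>0$, and $r\ge\tilde r\ge t\tilde tR$ with $\tilde r\le\epsilon r$, and suppose $q\in\partial_tB_r(p)$ and $0\in\partial_tB_r(p)\cap\partial_{\tilde t}B_{\tilde r}(q)$. If $R>\bar R$, $\epsilon<\bar\epsilon$, $|\tau_p|\le\bar\tau$ and $\max_{1\le i\le n}\phi_i(p,q)<\bar\phi$, then $d(\hat p,\hat q)>\bar\rho$.
   Context: $\mathbb{H}^n=\mathbb{C}^n\times\mathbb{R}$ with product $(z,\tau)(w,\sigma)=(z+w,\tau+\sigma+\tfrac12\operatorname{Im}\langle z,w\rangle)$, $\langle z,w\rangle=\sum_j\overline{z_j}w_j$, identity $0$; dilations $\delta_\lambda(z,\tau)=(\lambda z,\lambda^2\tau)$; $d(p,q)=\inf\{r>0:\delta_{1/r}(pq^{-1})\in B_{eucl}\}$ ($B_{eucl}$ the closed Euclidean unit ball in $\mathbb{R}^{2n+1}$), so the unit sphere of $d$ about $0$ is the Euclidean unit sphere. $B_r(p)=\{y:d(y,p)\le r\}$, $\partial B_r(p)=\{y:d(y,p)=r\}$, $\partial_tB_r(p)=\{y:d(y,\partial B_r(p))\le t\}$. For $p\ne0$ let $\hat p=\delta_{1/d(p,0)}p=(z_p,\tau_p)$, so $\|z_p\|^2+\tau_p^2=1$; write $(z_p)_j=\rho_j(p)e^{i\phi_j(p)}$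 with $\rho_j(p)\ge0$, $\phi_j(p)\in(-\pi,\pi]$. For $p,q\ne0$, $\phi_j(p,q)\in[0,\pi]$ is the magnitude of the angle between $e^{i\phi_j(p)}$ and $e^{i\phi_j(q)}$. *)

(* Defs.v *)
From Stdlib Require Import Reals ClassicalEpsilon.
From mathcomp Require Import ssreflect ssrfun ssrbool eqtype ssrnat fintype bigop.
Set Implicit Arguments.
Open Scope R_scope.

(* Points of H^n = C^n x R : z_j = hx j + i hy j, and tau = ht. *)
Record Hpt (n : nat) := mkH { hx : 'I_n -> R; hy : 'I_n -> R; ht : R }.

Definition Hzero (n : nat) : Hpt n := mkH (fun _ => 0) (fun _ => 0) 0.

Definition Rsum (n : nat) (f : 'I_n -> R) : R := \big[Rplus/0]_(i < n) f i.

(* Im <z,w> with <z,w> = sum conj(z_j) w_j *)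
Definition ImH (n : nat) (p q : Hpt n) : R :=
  Rsum (fun j => hx p j * hy q j - hy p j * hx q j).

Definition Hmul (n : nat) (p q : Hpt n) : Hpt n :=
  mkH (fun j => hx p j + hx q j) (fun j => hy p j + hy q j)
      (ht p + ht q + / 2 * ImH p q).

Definition Hinv (n : nat) (p : Hpt n) : Hpt n :=
  mkH (fun j => - hx p j) (fun j => - hy p j) (- ht p).

Definition dil (n : nat) (l : R) (p : Hpt n) : Hpt n :=
  mkH (fun j => l * hx p j) (fun j => l * hy p j) (l ^ 2 * ht p).

Definition eucl2 (n : nat) (p : Hpt n) : R :=
  Rsum (fun j => hx p j ^ 2 + hy p j ^ 2) + ht p ^ 2.

(* infimum of a set of reals (0 if it has no greatest lower bound) *)
Definition is_glb (E : R -> Prop) (m : R) : Prop :=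
  (forall x, E x -> m <= x) /\ (forall b, (forall x, E x -> b <= x) -> b <= m).

Definition Rinf (E : R -> Prop) : R :=
  match excluded_middle_informative (exists m, is_glb E m) with
  | left H => proj1_sig (constructive_indefinite_description _ H)
  | right _ => 0
  end.

Definition dH (n : nat) (p q : Hpt n) : R :=
  Rinf (fun r => 0 < r /\ eucl2 (dil (/ r) (Hmul p (Hinv q))) <= 1).

Definition sphere (n : nat) (r : R) (p : Hpt n) : Hpt n -> Prop :=
  fun y => dH y p = r.

Definition dset (n : nat) (y : Hpt n) (S : Hpt n -> Prop) : R :=
  Rinf (fun s => exists x, S x /\ s = dH y x).

(* the condition "y in d_t B_r(p)", i.e. d(y, dB_r(p)) <= t; requires dB_r(p) nonempty
   (d(y, emptyset) = +infinity) *)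
Definition thick_sphere (n : nat) (t r : R) (p : Hpt n) (y : Hpt n) : Prop :=
  (exists x, sphere r p x) /\ dset y (sphere r p) <= t.

Definition hat (n : nat) (p : Hpt n) : Hpt n := dil (/ dH p (Hzero n)) p.

(* unit complex number e^{i phi_j(p)} = z_j / |z_j| (convention: 1 if z_j = 0),
   where z_j is the j-th coordinate of hat p *)
Definition unit_re (n : nat) (p : Hpt n) (j : 'I_n) : R :=
  let a := hx (hat p) j in let b := hy (hat p) j in
  if Req_EM_T (sqrt (a ^ 2 + b ^ 2)) 0 then 1 else a / sqrt (a ^ 2 + b ^ 2).
Definition unit_im (n : nat) (p : Hpt n) (j : 'I_n) : R :=
  let a := hx (hat p) j in let b := hy (hat p) j in
  if Req_EM_T (sqrt (a ^ 2 + b ^ 2)) 0 then 0 else b / sqrt (a ^ 2 + b ^ 2).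

(* phi_j(p,q) in [0,pi]: magnitude of the angle between e^{i phi_j(p)} and e^{i phi_j(q)} *)
Definition phi_ang (n : nat) (j : 'I_n) (p q : Hpt n) : R :=
  acos (unit_re p j * unit_re q j + unit_im p j * unit_im q j).

(* Main.v *)
Require Import Defs.
From Stdlib Require Import Reals.
From mathcomp Require Import ssreflect fintype.
From mathcomp Require Import ssrfun ssrbool eqtype ssrnat bigop.
From Stdlib Require Import Lra Psatz Classical ClassicalEpsilon FunctionalExtensionality.
Open Scope R_scope.

Lemma Rsum_ext (n : nat) (f g : 'I_n -> R) : (forall j, f j = g j) -> Rsum f = Rsum g.
Proof. move=> H; rewrite /Rsum; apply: eq_bigr => i _; exact: H. Qed.
Arguments Rsum_ext {n f g}.

Lemma Rsum_lin (n : nat) (a b : R) (f g : 'I_n -> R) :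
  Rsum (fun j => a * f j + b * g j) = a * Rsum f + b * Rsum g.
Proof.
elim: n f g => [|n IH] f g; rewrite /Rsum.
- rewrite !big_ord0; ring.
- rewrite !big_ord_recl /=.
  have := IH (fun i => f (lift ord0 i)) (fun i => g (lift ord0 i)).
  rewrite /Rsum => ->.
  set A := bigop.body _ _ _. set B := bigop.body _ _ _. clearbody A B. ring.
Qed.
Arguments Rsum_lin {n}.

Lemma Rsum_le (n : nat) (f g : 'I_n -> R) : (forall j, f j <= g j) -> Rsum f <= Rsum g.
Proof.
elim: n f g => [|n IH] f g H; rewrite /Rsum.
- rewrite !big_ord0; lra.
- rewrite !big_ord_recl /=.
  have := IH (fun i => f (lift ord0 i)) (fun i => g (lift ord0 i)) (fun i => H _).
  rewrite /Rsum => h. have := H ord0. move: h.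
  set A := bigop.body _ _ _. set B := bigop.body _ _ _. clearbody A B. lra.
Qed.
Arguments Rsum_le {n}.

Lemma Rsum_0 (n : nat) : Rsum (fun _ : 'I_n => 0) = 0.
Proof.
rewrite (Rsum_ext (g := fun j => 0 * (fun _ => 0) j + 0 * (fun _ => 0) j)); last by move=> j /=; ring.
rewrite Rsum_lin; ring.
Qed.
Arguments Rsum_0 {n}.

Lemma Rsum_lin3 (n : nat) (a b c : R) (f g h : 'I_n -> R) :
  Rsum (fun j => a * f j + b * g j + c * h j) = a * Rsum f + b * Rsum g + c * Rsum h.
Proof.
rewrite (Rsum_ext (g := fun j => a * f j + 1 * (b * g j + c * h j))); last by move=> j; ring.
rewrite Rsum_lin Rsum_lin; ring.
Qed.
Arguments Rsum_lin3 {n}.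

Definition n2 (n : nat) (f g : 'I_n -> R) := Rsum (fun j => f j ^ 2 + g j ^ 2).
Arguments n2 {n}.
Definition ip (n : nat) (f g f' g' : 'I_n -> R) := Rsum (fun j => f j * f' j + g j * g' j).
Arguments ip {n}.
Definition im (n : nat) (f g f' g' : 'I_n -> R) := Rsum (fun j => f j * g' j - g j * f' j).
Arguments im {n}.
Definition nrm (n : nat) (f g : 'I_n -> R) := sqrt (n2 f g).
Arguments nrm {n}.

Lemma n2_ge0 (n : nat) (f g : 'I_n -> R) : 0 <= n2 f g.
Proof.
rewrite /n2 -(@Rsum_0 n); apply: Rsum_le => j; nra.
Qed.
Arguments n2_ge0 {n}.

Lemma nrm_ge0 (n : nat) (f g : 'I_n -> R) : 0 <= nrm f g.
Proof. apply: sqrt_pos. Qed.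
Arguments nrm_ge0 {n}.

Lemma nrm_sq (n : nat) (f g : 'I_n -> R) : nrm f g ^ 2 = n2 f g.
Proof. rewrite /nrm /= Rmult_1_r sqrt_sqrt //; apply: n2_ge0. Qed.
Arguments nrm_sq {n}.

Lemma ip_CS (n : nat) (f g f' g' : 'I_n -> R) :
  (ip f g f' g') ^ 2 <= n2 f g * n2 f' g'.
Proof.
have key : forall lam, 0 <= n2 f g - 2 * lam * ip f g f' g' + lam ^ 2 * n2 f' g'.
  move=> lam.
  have := n2_ge0 (fun j => f j - lam * f' j) (fun j => g j - lam * g' j).
  rewrite /n2 /ip.
  rewrite (Rsum_ext (g := fun j => 1 * (f j ^ 2 + g j ^ 2) + (- 2 * lam) * (f j * f' j + g j * g' j)
     + lam ^ 2 * (f' j ^ 2 + g' j ^ 2))); last by move=> j; ring.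
  rewrite Rsum_lin3. lra.
have hA := n2_ge0 f g. have hB := n2_ge0 f' g'.
set A := n2 f g in key hA *. set B := n2 f' g' in key hB *. set C := ip f g f' g' in key *.
case: (Req_dec B 0) => hB0.
- case: (Req_dec C 0) => hC0.
  + rewrite hC0 hB0; lra.
  + have := key ((A + 1) / (2 * C)). rewrite hB0.
    have -> : 2 * ((A + 1) / (2 * C)) * C = A + 1 by field.
    lra.
- have := key (C / B).
  have -> : 2 * (C / B) * C = 2 * (C ^ 2 / B) by field.
  have -> : (C / B) ^ 2 * B = C ^ 2 / B by field.
  move=> h.
  have hBp : 0 < B by lra.
  have : C ^ 2 / B <= A by lra.
  move=> h2. apply (Rmult_le_reg_r (/ B)). by apply Rinv_0_lt_compat.
  have -> : A * B * / B = A by field.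
  exact h2.
Qed.
Arguments ip_CS {n}.

Lemma sq_le_abs (x y : R) : 0 <= y -> x ^ 2 <= y ^ 2 -> Rabs x <= y.
Proof.
move=> hy h. case: (Rcase_abs x) => hx; [rewrite Rabs_left // | rewrite Rabs_right //]; nra.
Qed.

Lemma sq_le (x y : R) : 0 <= x -> 0 <= y -> x ^ 2 <= y ^ 2 -> x <= y.
Proof. move=> hx hy h; nra. Qed.

Lemma ip_bound (n : nat) (f g f' g' : 'I_n -> R) :
  Rabs (ip f g f' g') <= nrm f g * nrm f' g'.
Proof.
apply: sq_le_abs. apply: Rmult_le_pos; apply: nrm_ge0.
rewrite Rpow_mult_distr !nrm_sq; apply: ip_CS.
Qed.
Arguments ip_bound {n}.

Lemma n2_ext (n : nat) (f g f' g' : 'I_n -> R) :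
  (forall j, f j ^ 2 + g j ^ 2 = f' j ^ 2 + g' j ^ 2) -> n2 f g = n2 f' g'.
Proof. move=> H; rewrite /n2; apply: Rsum_ext => j; exact: H. Qed.
Arguments n2_ext {n f g f' g'}.

Lemma nrm_ext (n : nat) (f g f' g' : 'I_n -> R) :
  (forall j, f j ^ 2 + g j ^ 2 = f' j ^ 2 + g' j ^ 2) -> nrm f g = nrm f' g'.
Proof. move=> H; rewrite /nrm (n2_ext H) //. Qed.
Arguments nrm_ext {n f g f' g'}.

Lemma im_bound (n : nat) (f g f' g' : 'I_n -> R) :
  Rabs (im f g f' g') <= nrm f g * nrm f' g'.
Proof.
have -> : im f g f' g' = ip f g g' (fun j => - f' j).
  rewrite /im /ip; apply: Rsum_ext => j; ring.
rewrite (nrm_ext (f := f') (g := g') (f' := g') (g' := fun j => - f' j)); last by move=> j; ring.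
apply: ip_bound.
Qed.
Arguments im_bound {n}.

Lemma nrm_tri (n : nat) (f g f' g' : 'I_n -> R) :
  nrm (fun j => f j + f' j) (fun j => g j + g' j) <= nrm f g + nrm f' g'.
Proof.
have h : n2 (fun j => f j + f' j) (fun j => g j + g' j) = n2 f g + 2 * ip f g f' g' + n2 f' g'.
  rewrite /n2 /ip -(Rmult_1_l (Rsum (fun j => f j ^ 2 + g j ^ 2))).
  rewrite -(Rmult_1_l (Rsum (fun j => f' j ^ 2 + g' j ^ 2))) -Rsum_lin3.
  apply: Rsum_ext => j; ring.
have hb := ip_bound f g f' g'. have h1 := nrm_ge0 f g. have h2 := nrm_ge0 f' g'.
apply: sq_le; [apply: nrm_ge0|lra|].
rewrite nrm_sq h -!nrm_sq.
have : ip f g f' g' <= nrm f g * nrm f' g' by move: hb; rewrite /Rabs; case: Rcase_abs; lra.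
nra.
Qed.
Arguments nrm_tri {n}.

Lemma nrm_scal (n : nat) (c : R) (f g : 'I_n -> R) :
  nrm (fun j => c * f j) (fun j => c * g j) = Rabs c * nrm f g.
Proof.
rewrite /nrm.
have -> : n2 (fun j => c * f j) (fun j => c * g j) = c ^ 2 * n2 f g.
  rewrite /n2 (Rsum_ext (g := fun j => c ^ 2 * (f j ^ 2 + g j ^ 2) + 0 * (f j ^ 2 + g j ^ 2))); last by move=> j; ring.
  rewrite Rsum_lin; ring.
rewrite sqrt_mult; [|apply: pow2_ge_0|apply: n2_ge0].
have -> : sqrt (c ^ 2) = Rabs c by rewrite -sqrt_Rsqr_abs /Rsqr; f_equal; ring.
done.
Qed.
Arguments nrm_scal {n}.

Lemma nrm_comb3 (n : nat) (a b c : R) (F G f1 g1 f2 g2 f3 g3 : 'I_n -> R) :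
  (forall j, F j = a * f1 j + b * f2 j + c * f3 j) ->
  (forall j, G j = a * g1 j + b * g2 j + c * g3 j) ->
  nrm F G <= Rabs a * nrm f1 g1 + Rabs b * nrm f2 g2 + Rabs c * nrm f3 g3.
Proof.
move=> HF HG.
have -> : nrm F G = nrm (fun j => (fun j => a * f1 j + b * f2 j) j + c * f3 j)
                        (fun j => (fun j => a * g1 j + b * g2 j) j + c * g3 j).
  apply: nrm_ext => j. by rewrite HF HG.
apply: Rle_trans; first apply: nrm_tri.
rewrite nrm_scal.
have := nrm_tri (fun j => a * f1 j) (fun j => a * g1 j) (fun j => b * f2 j) (fun j => b * g2 j).
rewrite !nrm_scal. lra.
Qed.
Arguments nrm_comb3 {n}.

Ltac genbig := repeat match goal with |- context [bigop.body ?a ?b ?c ?d ?e] =>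
  let x := fresh "S" in generalize (bigop.body a b c d e); intro x end.

Definition Kf (n : nat) (x : Hpt n) : R :=
  (n2 (hx x) (hy x) + sqrt (n2 (hx x) (hy x) ^ 2 + 4 * ht x ^ 2)) / 2.
Arguments Kf {n}.
Definition Nf (n : nat) (x : Hpt n) : R := sqrt (Kf x).
Arguments Nf {n}.

Lemma Kf_facts (n : nat) (x : Hpt n) :
  let a := n2 (hx x) (hy x) in let K := Kf x in
  0 <= K /\ a <= K /\ Rabs (ht x) <= K /\ K <= a + Rabs (ht x) /\
  K ^ 2 = a * K + ht x ^ 2 /\
  (a - sqrt (a ^ 2 + 4 * ht x ^ 2)) / 2 <= 0 /\
  K * ((a - sqrt (a ^ 2 + 4 * ht x ^ 2)) / 2) = - ht x ^ 2 /\
  K + (a - sqrt (a ^ 2 + 4 * ht x ^ 2)) / 2 = a.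
Proof.
move=> a K.
have ha : 0 <= a := n2_ge0 _ _.
set s := sqrt (a ^ 2 + 4 * ht x ^ 2).
have hs0 : 0 <= s := sqrt_pos _.
have hs2 : s ^ 2 = a ^ 2 + 4 * ht x ^ 2.
  rewrite /s pow2_sqrt //; nra.
have hsa : a <= s by nra.
have hK : K = (a + s) / 2 by [].
have hsb : s <= a + 2 * Rabs (ht x).
  have habs : 0 <= Rabs (ht x) := Rabs_pos _.
  have : ht x ^ 2 = Rabs (ht x) ^ 2 by rewrite RPow_abs Rabs_right //; apply: Rle_ge; apply: pow2_ge_0.
  nra.
have e1 : K ^ 2 = a * K + ht x ^ 2 by rewrite hK; nra.
have hKb : Rabs (ht x) <= K.
  apply: sq_le_abs; first by rewrite hK; lra.
  rewrite e1. have : 0 <= a * K by apply: Rmult_le_pos; rewrite ?hK; lra. lra.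
repeat split; rewrite ?hK; try lra; try nra.
Qed.
Arguments Kf_facts {n}.

Lemma Nf_sq (n : nat) (x : Hpt n) : Nf x ^ 2 = Kf x.
Proof. rewrite /Nf pow2_sqrt //; by case: (Kf_facts x). Qed.
Arguments Nf_sq {n}.

Lemma Nf_ge0 (n : nat) (x : Hpt n) : 0 <= Nf x.
Proof. apply: sqrt_pos. Qed.
Arguments Nf_ge0 {n}.

Lemma eucl2_dil (n : nat) (l : R) (y : Hpt n) :
  eucl2 (dil l y) = l ^ 2 * n2 (hx y) (hy y) + l ^ 4 * ht y ^ 2.
Proof.
rewrite /eucl2 /n2.
rewrite (Rsum_ext (g := fun j => l ^ 2 * (hx y j ^ 2 + hy y j ^ 2) + 0 * 0)); last by move=> j /=; ring.
rewrite Rsum_lin. change (ht (dil l y)) with (l ^ 2 * ht y). ring.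
Qed.
Arguments eucl2_dil {n}.

Lemma glb_unique (E : R -> Prop) (m1 m2 : R) : is_glb E m1 -> is_glb E m2 -> m1 = m2.
Proof. move=> [h1 h1'] [h2 h2']. have := h1' _ h2. have := h2' _ h1. lra. Qed.

Lemma Rinf_glb (E : R -> Prop) : (exists m, is_glb E m) -> is_glb E (Rinf E).
Proof.
move=> H. rewrite /Rinf. case: excluded_middle_informative => [H'|//].
by case: (constructive_indefinite_description _ H').
Qed.

Lemma Rinf_eq (E : R -> Prop) (m : R) : is_glb E m -> Rinf E = m.
Proof. move=> H. apply: (glb_unique E); [apply: Rinf_glb; by exists m | exact H]. Qed.

Lemma dH_eq (n : nat) (p q : Hpt n) : dH p q = Nf (Hmul p (Hinv q)).
Proof.
rewrite /dH. apply: Rinf_eq.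
set y := Hmul p (Hinv q).
have [hK0 [haK [htK [hKa [e1 [hK'0 [eprod esum]]]]]]] := Kf_facts y.
move: hK'0 eprod esum.
set a := n2 (hx y) (hy y). set K' := (a - _) / 2. move=> hK'0 eprod esum.
have hN2 := Nf_sq y. have hN0 := Nf_ge0 y.
set K := Kf y in hK0 haK htK hKa e1 eprod esum hN2.
set N := Nf y in hN2 hN0 *.
have conv : forall r, 0 < r -> (eucl2 (dil (/ r) y) <= 1 <-> a * r ^ 2 + ht y ^ 2 <= r ^ 4).
  move=> r hr. rewrite eucl2_dil -/a.
  have -> : (/ r) ^ 2 * a + (/ r) ^ 4 * ht y ^ 2 = (a * r ^ 2 + ht y ^ 2) / r ^ 4 by field; lra.
  have hr4 : 0 < r ^ 4 by apply: pow_lt.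
  split => h.
  - have := Rmult_le_compat_r (r ^ 4) _ _ (Rlt_le _ _ hr4) h.
    have -> : (a * r ^ 2 + ht y ^ 2) / r ^ 4 * r ^ 4 = a * r ^ 2 + ht y ^ 2 by field; lra.
    lra.
  - apply: (Rmult_le_reg_r (r ^ 4)) => //.
    have -> : (a * r ^ 2 + ht y ^ 2) / r ^ 4 * r ^ 4 = a * r ^ 2 + ht y ^ 2 by field; lra.
    lra.
have poly : forall u, u ^ 2 - a * u - ht y ^ 2 = (u - K) * (u - K').
  move=> u. have -> : a = K + K' by lra. have -> : ht y ^ 2 = - (K * K') by lra. ring.
split.
- move=> r [hr hE]. move/(conv r hr): hE => hE.
  apply: sq_le; [lra|lra|]. rewrite hN2.
  have hp := poly (r ^ 2).
  case: (Rle_lt_dec K (r ^ 2)) => // hlt.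
  have : 0 < r ^ 2 by apply: pow_lt.
  have : (r ^ 2 - K) * (r ^ 2 - K') < 0.
    have : 0 < r ^ 2 - K' by have := pow_lt r 2 hr; lra.
    nra.
  move: hE. have -> : r ^ 4 = (r ^ 2) ^ 2 by ring. nra.
- move=> b hb. case: (Rle_lt_dec b N) => // hlt.
  set x := (N + b) / 2.
  have hx : 0 < x by rewrite /x; lra.
  have : b <= x.
    apply: hb. split => //. apply/(conv x hx).
    have hxN : N < x by rewrite /x; lra.
    have hx2 : K < x ^ 2 by rewrite -hN2; nra.
    have hp := poly (x ^ 2).
    have : 0 <= (x ^ 2 - K) * (x ^ 2 - K') by apply: Rmult_le_pos; nra.
    have -> : x ^ 4 = (x ^ 2) ^ 2 by ring. nra.
  rewrite /x; lra.
Qed.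
Arguments dH_eq {n}.

Lemma glb_exists (E : R -> Prop) : (exists x, E x) -> (forall x, E x -> 0 <= x) ->
  exists m, is_glb E m.
Proof.
move=> [x0 hx0] hlb.
have hb : bound (fun s => E (- s)).
  exists 0 => s hs. have := hlb _ hs. lra.
have hne : exists s, E (- s) by exists (- x0); rewrite Ropp_involutive.
case: (completeness _ hb hne) => m [hm1 hm2].
exists (- m). split.
- move=> x hx. have : x = - - x by ring. move=> ex.
  have := hm1 (- x). rewrite -ex => h. have := h hx. lra.
- move=> b hb'. have : m <= - b.
    apply: hm2 => s hs. have := hb' _ hs. lra.
  lra.
Qed.

Lemma dset_ex (n : nat) (y : Hpt n) (S : Hpt n -> Prop) (t : R) :
  (exists x, S x) -> dset y S <= t -> exists x, S x /\ dH y x <= t + 1.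
Proof.
move=> [x0 hx0] hd.
set E := fun s => exists x, S x /\ s = dH y x.
have hg : exists m, is_glb E m.
  apply: glb_exists.
  - exists (dH y x0). by exists x0.
  - move=> s [x [_ ->]]. rewrite dH_eq. apply: Nf_ge0.
have [h1 h2] := Rinf_glb E hg.
apply: NNPP => hno.
have : t + 1 <= Rinf E.
  apply: h2 => s [x [hx ->]].
  apply: Rnot_lt_le => hlt. apply: hno. exists x. split => //. lra.
rewrite /dset -/E in hd. lra.
Qed.

Lemma thick_ex (n : nat) (t r : R) (p y : Hpt n) :
  thick_sphere t r p y -> exists x, dH x p = r /\ dH y x <= t + 1.
Proof. move=> [h1 h2]. exact: dset_ex h1 h2. Qed.
Arguments thick_ex {n t r p y}.

Definition nz (n : nat) (a : Hpt n) := nrm (hx a) (hy a).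
Arguments nz {n}.
Definition nzd (n : nat) (a b : Hpt n) :=
  nrm (fun j => hx a j + - hx b j) (fun j => hy a j + - hy b j).
Arguments nzd {n}.

Lemma pt_facts (n : nat) (a b : Hpt n) :
  let N := dH a b in let T := ht a + - ht b + / 2 * ImH a (Hinv b) in
  0 <= N /\ nzd a b <= N /\ Rabs T <= N ^ 2 /\ N ^ 2 <= nzd a b ^ 2 + Rabs T /\
  N ^ 4 = nzd a b ^ 2 * N ^ 2 + T ^ 2.
Proof.
move=> N T.
have [hK0 [haK [htK [hKa [e1 _]]]]] := Kf_facts (Hmul a (Hinv b)).
have hN2 := Nf_sq (Hmul a (Hinv b)). have hN0 := Nf_ge0 (Hmul a (Hinv b)).
have eN : N = Nf (Hmul a (Hinv b)) by rewrite /N dH_eq.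
have ea : n2 (hx (Hmul a (Hinv b))) (hy (Hmul a (Hinv b))) = nzd a b ^ 2 by rewrite /nzd nrm_sq.
have eT : ht (Hmul a (Hinv b)) = T by [].
rewrite ea eT -hN2 -eN in haK htK hKa e1.
have hz0 : 0 <= nzd a b by apply: nrm_ge0.
rewrite -eN in hN0.
split => //.
split; first by apply: sq_le => //.
split => //. split => //.
rewrite -e1. ring.
Qed.
Arguments pt_facts {n}.

Lemma nzd_sym (n : nat) (a b : Hpt n) : nzd a b = nzd b a.
Proof. apply: nrm_ext => j; ring. Qed.
Arguments nzd_sym {n}.

Lemma nzd_le (n : nat) (a b : Hpt n) : nzd a b <= nz a + nz b.
Proof.
have := nrm_comb3 1 (-1) 0 (fun j => hx a j + - hx b j) (fun j => hy a j + - hy b j)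
   (hx a) (hy a) (hx b) (hy b) (hx a) (hy a).
rewrite /nzd /nz Rabs_R1 Rabs_Ropp Rabs_R1 Rabs_R0 => h.
have := h ltac:(move=> j; ring) ltac:(move=> j; ring). lra.
Qed.
Arguments nzd_le {n}.

Lemma nz_le (n : nat) (a b : Hpt n) : nz a <= nzd a b + nz b.
Proof.
have := nrm_comb3 1 1 0 (hx a) (hy a) (fun j => hx a j + - hx b j) (fun j => hy a j + - hy b j)
   (hx b) (hy b) (hx a) (hy a).
rewrite /nzd /nz Rabs_R1 Rabs_R0 => h.
have := h ltac:(move=> j; ring) ltac:(move=> j; ring). lra.
Qed.
Arguments nz_le {n}.

Lemma nzd_0l (n : nat) (x : Hpt n) : nzd (Hzero n) x = nz x.
Proof. apply: nrm_ext => j /=; ring. Qed.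
Arguments nzd_0l {n}.
Lemma nzd_0r (n : nat) (x : Hpt n) : nzd x (Hzero n) = nz x.
Proof. apply: nrm_ext => j /=; ring. Qed.
Arguments nzd_0r {n}.

Lemma ImH_bound (n : nat) (a b : Hpt n) : Rabs (ImH a (Hinv b)) <= nz a * nz b.
Proof.
have := im_bound (hx a) (hy a) (hx (Hinv b)) (hy (Hinv b)).
have -> : nrm (hx (Hinv b)) (hy (Hinv b)) = nz b by apply: nrm_ext => j /=; ring.
done.
Qed.
Arguments ImH_bound {n}.

Lemma ImH_0l (n : nat) (x : Hpt n) : ImH (Hzero n) x = 0.
Proof.
rewrite /ImH -(@Rsum_0 n). apply: Rsum_ext => j /=; ring.
Qed.
Arguments ImH_0l {n}.
Lemma ImH_0r (n : nat) (x : Hpt n) : ImH x (Hinv (Hzero n)) = 0.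
Proof.
rewrite /ImH -(@Rsum_0 n). apply: Rsum_ext => j /=; ring.
Qed.
Arguments ImH_0r {n}.

Lemma N0_facts (n : nat) (p : Hpt n) :
  let N := dH p (Hzero n) in
  0 <= N /\ nz p <= N /\ Rabs (ht p) <= N ^ 2 /\ N ^ 2 <= nz p ^ 2 + Rabs (ht p) /\
  N ^ 4 = nz p ^ 2 * N ^ 2 + ht p ^ 2.
Proof.
have := pt_facts p (Hzero n). rewrite /= nzd_0r ImH_0r.
have -> : ht p + - 0 + / 2 * 0 = ht p by ring. done.
Qed.
Arguments N0_facts {n}.

Lemma N0l_facts (n : nat) (p : Hpt n) :
  let N := dH (Hzero n) p in nz p <= N /\ Rabs (ht p) <= N ^ 2.
Proof.
have := pt_facts (Hzero n) p. rewrite /= nzd_0l ImH_0l.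
have -> : 0 + - ht p + / 2 * 0 = - ht p by ring. rewrite Rabs_Ropp.
move=> [_ [h1 [h2 _]]]. done.
Qed.
Arguments N0l_facts {n}.

Lemma hat_unit (n : nat) (p : Hpt n) : 0 < dH p (Hzero n) ->
  nz (hat p) ^ 2 + ht (hat p) ^ 2 = 1.
Proof.
move=> hN.
have [_ [_ [_ [_ e]]]] := N0_facts p.
have : eucl2 (hat p) = nz (hat p) ^ 2 + ht (hat p) ^ 2 by rewrite /nz nrm_sq.
move=> <-. rewrite /hat eucl2_dil.
have -> : n2 (hx p) (hy p) = nz p ^ 2 by rewrite /nz nrm_sq.
move: e hN. set N := dH p (Hzero n). move=> e hN.
have hN4 : N ^ 4 <> 0 by apply: pow_nonzero; apply: Rgt_not_eq; lra.
clearbody N.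
have -> : (/ N) ^ 2 * (nz p ^ 2) + (/ N) ^ 4 * ht p ^ 2 = (nz p ^ 2 * N ^ 2 + ht p ^ 2) / N ^ 4.
  field; apply: Rgt_not_eq; lra.
rewrite -e. field. apply: Rgt_not_eq; lra.
Qed.
Arguments hat_unit {n}.

Lemma ident_A (n : nat) (x0 x1 p hp : Hpt n) (Np : R) :
  (forall j, hx p j = Np * hx hp j) -> (forall j, hy p j = Np * hy hp j) ->
  nzd x1 p ^ 2 - nzd x0 p ^ 2 =
  2 * ip (hx x0) (hy x0) (fun j => hx x1 j - hx x0 j) (fun j => hy x1 j - hy x0 j)
  - 2 * Np * ip (hx hp) (hy hp) (fun j => hx x1 j - hx x0 j) (fun j => hy x1 j - hy x0 j)
  + n2 (fun j => hx x1 j - hx x0 j) (fun j => hy x1 j - hy x0 j).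
Proof.
move=> ex ey. rewrite /nzd !nrm_sq /n2 /ip.
rewrite -(Rmult_1_l (Rsum (fun j => (hx x1 j + - hx p j) ^ 2 + (hy x1 j + - hy p j) ^ 2))).
have -> : forall a b : R, 1 * a - b = 1 * a + (-1) * b by move=> a b; ring.
rewrite -Rsum_lin.
have -> : forall a b c : R, 2 * a - 2 * Np * b + c = 2 * a + (- 2 * Np) * b + 1 * c by move=> a b c; ring.
rewrite -Rsum_lin3. apply: Rsum_ext => j. rewrite ex ey. ring.
Qed.
Arguments ident_A {n}.

Lemma ident_T (n : nat) (x0 x1 p hp : Hpt n) (Np : R) :
  (forall j, hx p j = Np * hx hp j) -> (forall j, hy p j = Np * hy hp j) ->
  ImH x1 (Hinv p) - ImH x0 (Hinv p) =
  - Np * im (fun j => hx x1 j - hx x0 j) (fun j => hy x1 j - hy x0 j) (hx hp) (hy hp).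
Proof.
move=> ex ey. rewrite /ImH /im.
have -> : forall a b : R, a - b = 1 * a + (-1) * b by move=> a b; ring.
rewrite -Rsum_lin.
have -> : forall a : R, - Np * a = (- Np) * a + 0 * a by move=> a; ring.
rewrite -Rsum_lin. apply: Rsum_ext => j /=. rewrite ex ey. ring.
Qed.
Arguments ident_T {n}.

Lemma ident_G (n : nat) (Dx Dy : 'I_n -> R) (hp : Hpt n) (Nq : R) :
  ip (hx hp) (hy hp) Dx Dy = Nq * nz hp ^ 2 +
    ip (hx hp) (hy hp) (fun j => Dx j - Nq * hx hp j) (fun j => Dy j - Nq * hy hp j).
Proof.
rewrite /nz nrm_sq /n2 /ip.
have -> : forall a b : R, Nq * a + b = Nq * a + 1 * b by move=> a b; ring.
rewrite -Rsum_lin.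
apply: Rsum_ext => j. ring.
Qed.
Arguments ident_G {n}.

Lemma ident_H (n : nat) (Dx Dy : 'I_n -> R) (hp : Hpt n) (Nq : R) :
  im Dx Dy (hx hp) (hy hp) =
    im (fun j => Dx j - Nq * hx hp j) (fun j => Dy j - Nq * hy hp j) (hx hp) (hy hp).
Proof. rewrite /im. apply: Rsum_ext => j. ring. Qed.
Arguments ident_H {n}.

Lemma bound_E (n : nat) (x0 x1 q hp hq : Hpt n) (Nq : R) : 0 <= Nq ->
  (forall j, hx q j = Nq * hx hq j) -> (forall j, hy q j = Nq * hy hq j) ->
  nrm (fun j => (hx x1 j - hx x0 j) - Nq * hx hp j) (fun j => (hy x1 j - hy x0 j) - Nq * hy hp j)
  <= nzd q x1 + nz x0 + Nq * nzd hp hq.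
Proof.
move=> hN ex ey.
have := nrm_comb3 (-1) (-1) Nq (fun j => (hx x1 j - hx x0 j) - Nq * hx hp j)
  (fun j => (hy x1 j - hy x0 j) - Nq * hy hp j)
  (fun j => hx q j + - hx x1 j) (fun j => hy q j + - hy x1 j) (hx x0) (hy x0)
  (fun j => hx hq j + - hx hp j) (fun j => hy hq j + - hy hp j).
rewrite Rabs_Ropp Rabs_R1 (Rabs_right Nq); last by lra.
move=> h. have := h ltac:(move=> j; rewrite ex; ring) ltac:(move=> j; rewrite ey; ring).
rewrite -/(nzd q x1) -/(nz x0) -/(nzd hq hp) (nzd_sym hq hp). lra.
Qed.
Arguments bound_E {n}.

Lemma bound_Dn (n : nat) (Dx Dy : 'I_n -> R) (hp : Hpt n) (Nq : R) : 0 <= Nq ->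
  nrm Dx Dy <= Nq * nz hp + nrm (fun j => Dx j - Nq * hx hp j) (fun j => Dy j - Nq * hy hp j).
Proof.
move=> hN.
have := nrm_comb3 Nq 1 0 Dx Dy (hx hp) (hy hp)
  (fun j => Dx j - Nq * hx hp j) (fun j => Dy j - Nq * hy hp j) (hx hp) (hy hp).
rewrite Rabs_R1 Rabs_R0 (Rabs_right Nq); last by lra.
move=> h. have := h ltac:(move=> j; ring) ltac:(move=> j; ring).
rewrite -/(nz hp). lra.
Qed.
Arguments bound_Dn {n}.

Lemma final_ineq (r Np Nq t E Dn G H X T0 Dt c2 rho : R) :
  0 < c2 -> c2 <= 1 -> 0 <= t -> 0 < r ->
  1000 * t <= 2 * c2 * Nq -> 500 * Nq <= c2 * r -> 0 < Nq ->
  r / 2 <= Np -> Np <= 4 * r ->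
  0 <= E -> E <= 4 * t + Nq * rho -> 0 <= rho -> rho <= c2 / 20 ->
  Nq * c2 - E <= G -> Rabs H <= E -> 0 <= Dn -> Dn <= Nq + E ->
  Rabs X <= 2 * t * Dn -> Rabs T0 <= r ^ 2 ->
  Rabs Dt <= Nq ^ 2 + 8 * t ^ 2 + / 2 * Nq * (Nq + 2 * t) ->
  2 * r ^ 2 * (X - Np * G) + r ^ 2 * Dn ^ 2 +
    (Dt - Np / 2 * H) * (2 * T0 + (Dt - Np / 2 * H)) = 0 ->
  False.
Proof.
move=> hc hc1 ht hr ht1 hq1 hNq hNp1 hNp2 hE0 hE hrho0 hrho hG hH hDn0 hDn hX hT0 hDt eq.
have hE' : E <= 58 / 1000 * c2 * Nq by nra.
have hG' : 942 / 1000 * c2 * Nq <= G by lra.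
have htN : t <= 2 / 1000 * Nq by nra.
have hNqr : Nq ^ 2 <= c2 * r * Nq / 500 by nra.
have hDt' : Rabs Dt <= 2 * Nq ^ 2 by nra.
have hHE : Rabs (Np / 2 * H) <= 2 * r * E.
  rewrite Rabs_mult Rabs_right; last by lra.
  have : Np / 2 <= 2 * r by lra. have := Rabs_pos H. nra.
set V := Dt - Np / 2 * H in eq.
have hV : Rabs V <= 12 / 100 * c2 * r * Nq.
  have : Rabs V <= Rabs Dt + Rabs (Np / 2 * H).
    rewrite /V /Rminus. apply: Rle_trans (Rabs_triang _ _) _.
    rewrite Rabs_Ropp; lra.
  nra.
have hLHS : 942 / 1000 * c2 * r ^ 3 * Nq <= 2 * r ^ 2 * Np * G.
  have hr2 : 0 < r ^ 2 by nra.
  have h1 : r / 2 * G <= Np * G by apply: Rmult_le_compat_r; nra.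
  have h2 : r / 2 * (942 / 1000 * c2 * Nq) <= r / 2 * G by apply: Rmult_le_compat_l; lra.
  have := Rmult_le_compat_l (2 * r ^ 2) _ _ (Rlt_le _ _ (Rmult_lt_0_compat 2 _ Rlt_0_2 hr2)) (Rle_trans _ _ _ h2 h1).
  move=> h3. have -> : 942 / 1000 * c2 * r ^ 3 * Nq = 2 * r ^ 2 * (r / 2 * (942 / 1000 * c2 * Nq)) by field.
  have -> : 2 * r ^ 2 * Np * G = 2 * r ^ 2 * (Np * G) by ring. exact h3.
have hX' : Rabs (2 * r ^ 2 * X) <= 1 / 100 * c2 * r ^ 3 * Nq.
  rewrite Rabs_mult Rabs_right; last by nra.
  have : Rabs X <= 2 * t * (Nq + E) by nra.
  have : Rabs X <= 5 / 1000 * Nq * Nq by nra.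
  move=> h. have : 0 < r ^ 2 by nra. nra.
have hD2 : r ^ 2 * Dn ^ 2 <= 1 / 100 * c2 * r ^ 3 * Nq.
  have hcN : c2 * Nq <= Nq by nra.
  have hDn' : Dn <= 106 / 100 * Nq by lra.
  have hD : Dn ^ 2 <= 2 * Nq ^ 2 by nra.
  have hr2 : 0 < r ^ 2 by nra.
  have : r ^ 2 * Dn ^ 2 <= r ^ 2 * (2 * Nq ^ 2) by apply: Rmult_le_compat_l; lra.
  have : r ^ 2 * Nq ^ 2 <= r ^ 2 * (c2 * r * Nq / 500) by apply: Rmult_le_compat_l; lra.
  have -> : r ^ 3 = r ^ 2 * r by ring. nra.
have hVT : Rabs (V * (2 * T0 + V)) <= 1 / 2 * c2 * r ^ 3 * Nq.
  rewrite Rabs_mult.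
  have : Rabs (2 * T0 + V) <= 2 * r ^ 2 + Rabs V.
    apply: Rle_trans (Rabs_triang _ _) _.
    rewrite Rabs_mult Rabs_right; lra.
  move=> hT.
  have hrN : r * Nq <= r ^ 2 / 500 by nra.
  have hcrN : c2 * (r * Nq) <= r * Nq by nra.
  have hV2 : Rabs V <= r ^ 2 by nra.
  have hVp := Rabs_pos V.
  have h1 : Rabs V * Rabs (2 * T0 + V) <= Rabs V * (3 * r ^ 2).
    apply: Rmult_le_compat_l => //; lra.
  have h2 : Rabs V * (3 * r ^ 2) <= (12 / 100 * c2 * r * Nq) * (3 * r ^ 2).
    apply: Rmult_le_compat_r => //; nra.
  have -> : 1 / 2 * c2 * r ^ 3 * Nq = (12 / 100 * c2 * r * Nq) * (3 * r ^ 2) + 14 / 100 * c2 * r ^ 3 * Nq by field.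
  have : 0 <= 14 / 100 * c2 * r ^ 3 * Nq.
    have : 0 < r ^ 3 by apply: pow_lt. move=> h. apply: Rmult_le_pos; [|lra]. nra.
  lra.
have : 2 * r ^ 2 * Np * G = 2 * r ^ 2 * X + r ^ 2 * Dn ^ 2 + V * (2 * T0 + V) by lra.
move=> hid.
have := Rle_abs (2 * r ^ 2 * X). have := Rle_abs (V * (2 * T0 + V)).
have : 0 < c2 * r ^ 3 * Nq.
  have : 0 < r ^ 3 by apply: pow_lt. move=> h. apply: Rmult_lt_0_compat => //. nra.
lra.
Qed.

Lemma abs_le (x y : R) : Rabs x <= y -> - y <= x <= y.
Proof. rewrite /Rabs; case: Rcase_abs; lra. Qed.

Lemma N_bounds (r Np t a0 T0 nx0 hx0 np hp I : R) :
  0 < r -> 0 <= t -> 1000 * t <= r -> 0 <= a0 -> 0 <= nx0 -> 0 <= Np -> 0 <= np ->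
  nx0 <= 2 * t -> Rabs hx0 <= 4 * t ^ 2 -> np <= Np -> Rabs hp <= Np ^ 2 ->
  Np ^ 2 <= np ^ 2 + Rabs hp -> a0 <= nx0 + np -> np <= a0 + nx0 ->
  T0 = hx0 + - hp + / 2 * I -> Rabs I <= nx0 * np ->
  r ^ 4 = a0 ^ 2 * r ^ 2 + T0 ^ 2 ->
  r / 2 <= Np <= 4 * r.
Proof.
move=> hr ht htr ha0 hnx hNp hnp hnx0 hhx0 hnpN hhp hNp2 ha0le hnple eT hI eq.
move/abs_le: hhx0 => hhx0. move/abs_le: hhp => hhp. move/abs_le: hI => hI.
have hr2 : 0 < r ^ 2 by nra.
split.
- apply: Rnot_lt_le => hlt.
  have h1 : a0 <= 502 / 1000 * r by lra.
  have h2 : a0 ^ 2 <= 26 / 100 * r ^ 2 by nra.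
  have ht2 : t ^ 2 <= r ^ 2 / 1000000 by nra.
  have hNp' : Np ^ 2 <= r ^ 2 / 4 by nra.
  have htN : t * Np <= r ^ 2 / 2000 by nra.
  have hI' : Rabs (/ 2 * I) <= t * Np.
    rewrite Rabs_mult Rabs_right; last by lra.
    have : Rabs I <= nx0 * np by rewrite /Rabs; case: Rcase_abs; lra.
    have : nx0 * np <= 2 * t * Np by apply: Rmult_le_compat; lra. lra.
  have hT : Rabs T0 <= 26 / 100 * r ^ 2.
    rewrite eT. move/abs_le: hI' => hI'. rewrite /Rabs; case: Rcase_abs; nra.
  have hT2 : T0 ^ 2 <= (26 / 100 * r ^ 2) ^ 2.
    have := Rabs_pos T0. have -> : T0 ^ 2 = Rabs T0 ^ 2 by rewrite RPow_abs Rabs_right //; apply: Rle_ge; apply: pow2_ge_0.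
    nra.
  have : a0 ^ 2 * r ^ 2 <= 26 / 100 * r ^ 2 * r ^ 2 by apply: Rmult_le_compat_r; lra.
  have e4 : r ^ 4 = r ^ 2 * r ^ 2 by ring. rewrite e4 in eq.
  nra.
- have ha0r : a0 <= r.
    apply: Rnot_lt_le => hlt.
    have : r ^ 2 < a0 ^ 2 by nra.
    have : 0 <= T0 ^ 2 by apply: pow2_ge_0.
    move=> h h'. have : r ^ 2 * r ^ 2 < a0 ^ 2 * r ^ 2 by apply: Rmult_lt_compat_r.
    have e4 : r ^ 4 = r ^ 2 * r ^ 2 by ring. rewrite e4 in eq. lra.
  have hT : Rabs T0 <= r ^ 2.
    apply: sq_le_abs; first lra.
    have : 0 <= a0 ^ 2 * r ^ 2 by apply: Rmult_le_pos; apply: pow2_ge_0.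
    have -> : (r ^ 2) ^ 2 = r ^ 4 by ring. lra.
  move/abs_le: hT => hT.
  have hnp' : np <= r + 2 * t by lra.
  have ht2 : t ^ 2 <= r ^ 2 / 1000000 by nra.
  have hnxnp : nx0 * np <= 2 * t * (r + 2 * t) by apply: Rmult_le_compat; lra.
  have hhp' : Rabs hp <= 4 * t ^ 2 + / 2 * (2 * t * (r + 2 * t)) + r ^ 2.
    rewrite /Rabs; case: Rcase_abs; lra.
  have : np ^ 2 <= (r + 2 * t) ^ 2 by nra.
  move=> hnp2.
  apply: sq_le; [lra|lra|]. nra.
Qed.

Lemma sq_mono (a b : R) : 0 <= a -> a <= b -> a ^ 2 <= b ^ 2.
Proof. move=> h1 h2; nra. Qed.

Lemma pow22 (r : R) : (r ^ 2) ^ 2 = r ^ 4.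
Proof. ring. Qed.

Lemma alg_eq (r A0 A1 T0 T1 X Np G n2D Dn H I0 I1 h0 h1 hp : R) :
  r ^ 4 = A0 * r ^ 2 + T0 ^ 2 -> r ^ 4 = A1 * r ^ 2 + T1 ^ 2 ->
  A1 - A0 = 2 * X - 2 * Np * G + n2D -> Dn ^ 2 = n2D -> I1 - I0 = - Np * H ->
  T0 = h0 + - hp + / 2 * I0 -> T1 = h1 + - hp + / 2 * I1 ->
  2 * r ^ 2 * (X - Np * G) + r ^ 2 * Dn ^ 2 +
    (h1 - h0 - Np / 2 * H) * (2 * T0 + (h1 - h0 - Np / 2 * H)) = 0.
Proof.
move=> e0 e1 eA eD eI eT0 eT1.
have eV : T1 = T0 + (h1 - h0 - Np / 2 * H).
  rewrite eT1 eT0. have -> : I1 = I0 - Np * H by lra. field.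
have -> : 2 * r ^ 2 * (X - Np * G) + r ^ 2 * Dn ^ 2 = r ^ 2 * (A1 - A0) by rewrite eA -eD; ring.
have -> : (h1 - h0 - Np / 2 * H) * (2 * T0 + (h1 - h0 - Np / 2 * H)) = T1 ^ 2 - T0 ^ 2 by rewrite eV; ring.
have : r ^ 2 * (A1 - A0) = A1 * r ^ 2 - A0 * r ^ 2 by ring.
lra.
Qed.

Theorem lemma12 (n : nat) (taub : R) :
  0 < taub < 1 ->
  exists rhob Rb phib epsb : R,
    0 < rhob /\ 0 < Rb /\ 0 < phib /\ 0 < epsb /\
    forall (p q : Hpt n) (t tt Rr eps r rt : R),
      p <> Hzero n -> q <> Hzero n ->
      1 <= t -> 1 <= tt -> 1 < Rr -> 0 < eps ->
      t * tt * Rr <= rt -> rt <= r -> rt <= eps * r ->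
      thick_sphere t r p q ->
      thick_sphere t r p (Hzero n) ->
      thick_sphere tt rt q (Hzero n) ->
      Rb < Rr -> eps < epsb ->
      Rabs (ht (hat p)) <= taub ->
      (forall i : 'I_n, phi_ang i p q < phib) ->
      dH (hat p) (hat q) > rhob.
Proof.
move=> [htau0 htau1].
have [c2 ec2] : exists c2, c2 = 1 - taub ^ 2 by eexists.
have hc2 : 0 < c2 by rewrite ec2; nra.
have hc21 : c2 <= 1 by rewrite ec2; nra.
exists (c2 / 20), (1000 / c2), 1, (c2 / 4000).
split; first by apply: Rdiv_lt_0_compat; lra.
split; first by apply: Rdiv_lt_0_compat; lra.
split; first lra.
split; first by apply: Rdiv_lt_0_compat; lra.
move=> p q t tt Rr eps r rt _ _ Ht Htt HR Heps Hrt1 Hrt2 Hrt3 H1 H2 H3 HRb Hepsb Htau _.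
apply: Rnot_le_gt => Hd.
have hRr : 1000 < c2 * Rr.
  have := Rmult_lt_compat_l c2 _ _ hc2 HRb.
  have -> : c2 * (1000 / c2) = 1000 by field; lra. done.
have htR : t * Rr <= rt.
  have : t * Rr * 1 <= t * Rr * tt by apply: Rmult_le_compat_l; nra.
  nra.
have httR : tt * Rr <= rt.
  have : tt * Rr * 1 <= tt * Rr * t by apply: Rmult_le_compat_l; nra.
  nra.
have hrt0 : 0 < rt by nra.
have hr0 : 0 < r by lra.
have L1 : 1000 * t <= c2 * rt.
  have : 1000 * t <= c2 * Rr * t by nra.
  have : c2 * (t * Rr) <= c2 * rt by apply: Rmult_le_compat_l; lra.
  nra.
have L2 : 1000 * tt <= c2 * rt.
  have : 1000 * tt <= c2 * Rr * tt by nra.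
  have : c2 * (tt * Rr) <= c2 * rt by apply: Rmult_le_compat_l; lra.
  nra.
have L3 : 4000 * rt <= c2 * r.
  have : eps * r <= c2 / 4000 * r by apply: Rmult_le_compat_r; lra.
  lra.
have hcrt : c2 * rt <= rt by nra.
have [x1 [Hx1p Hqx1]] := thick_ex H1.
have [x0 [Hx0p H0x0]] := thick_ex H2.
have [x2 [Hx2q H0x2]] := thick_ex H3.
have [hx0a hx0b] := N0l_facts x0.
have [hdx0 _] := pt_facts (Hzero n) x0.
have hnx0 : nz x0 <= 2 * t by lra.
have hhx0 : Rabs (ht x0) <= 4 * t ^ 2.
  have := sq_mono _ _ hdx0 H0x0. nra.
have [hx2a hx2b] := N0l_facts x2.
have [hdx2 _] := pt_facts (Hzero n) x2.
have hnx2 : nz x2 <= 2 * tt by lra.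
have hhx2 : Rabs (ht x2) <= 4 * tt ^ 2.
  have := sq_mono _ _ hdx2 H0x2. nra.
have [hdq1 [hq1a [hq1b _]]] := pt_facts q x1.
have hnq1 : nzd q x1 <= 2 * t by lra.
have hTq1 : Rabs (ht q + - ht x1 + / 2 * ImH q (Hinv x1)) <= 4 * t ^ 2.
  have := sq_mono _ _ hdq1 Hqx1. nra.
have [_ [_ [_ [_ eq0]]]] := pt_facts x0 p. rewrite Hx0p in eq0.
have [_ [_ [_ [_ eq1]]]] := pt_facts x1 p. rewrite Hx1p in eq1.
have [_ [_ [_ [_ eq2]]]] := pt_facts x2 q. rewrite Hx2q in eq2.
have [hNp0 [hNp1 [hNp2 [hNp3 _]]]] := N0_facts p.
have [hNq0 [hNq1 [hNq2 [hNq3 _]]]] := N0_facts q.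
have [hNpl hNpu] : r / 2 <= dH p (Hzero n) <= 4 * r.
  apply: (N_bounds r _ t (nzd x0 p) _ (nz x0) (ht x0) (nz p) (ht p) (ImH x0 (Hinv p))) => //.
  - lra.
  - nra.
  - apply: nrm_ge0.
  - apply: nrm_ge0.
  - apply: nrm_ge0.
  - apply: nzd_le.
  - rewrite nzd_sym; apply: nz_le.
  - apply: ImH_bound.
have [hNql hNqu] : rt / 2 <= dH q (Hzero n) <= 4 * rt.
  apply: (N_bounds rt _ tt (nzd x2 q) _ (nz x2) (ht x2) (nz q) (ht q) (ImH x2 (Hinv q))) => //.
  - lra.
  - lra.
  - apply: nrm_ge0.
  - apply: nrm_ge0.
  - apply: nrm_ge0.
  - apply: nzd_le.
  - rewrite nzd_sym; apply: nz_le.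
  - apply: ImH_bound.
have hNp : 0 < dH p (Hzero n) by lra.
have hNq : 0 < dH q (Hzero n) by lra.
have rpx : forall j, hx p j = dH p (Hzero n) * hx (hat p) j.
  move=> j; rewrite /hat /=; field; apply: Rgt_not_eq; lra.
have rpy : forall j, hy p j = dH p (Hzero n) * hy (hat p) j.
  move=> j; rewrite /hat /=; field; apply: Rgt_not_eq; lra.
have rqx : forall j, hx q j = dH q (Hzero n) * hx (hat q) j.
  move=> j; rewrite /hat /=; field; apply: Rgt_not_eq; lra.
have rqy : forall j, hy q j = dH q (Hzero n) * hy (hat q) j.
  move=> j; rewrite /hat /=; field; apply: Rgt_not_eq; lra.
have hpu := hat_unit p hNp.
have hnzp0 : 0 <= nz (hat p) by apply: nrm_ge0.
have hnzp1 : nz (hat p) <= 1.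
  apply: sq_le; [lra|lra|]. have := pow2_ge_0 (ht (hat p)). lra.
have hnzpc : c2 <= nz (hat p) ^ 2.
  have := sq_mono _ _ (Rabs_pos _) Htau.
  rewrite RPow_abs Rabs_right; last by apply: Rle_ge; apply: pow2_ge_0.
  lra.
have [_ [hd1 _]] := pt_facts (hat p) (hat q).
have hrho : nzd (hat p) (hat q) <= c2 / 20 by lra.
have hrho0 : 0 <= nzd (hat p) (hat q) by apply: nrm_ge0.
have IA := ident_A x0 x1 p (hat p) _ rpx rpy.
have IT := ident_T x0 x1 p (hat p) _ rpx rpy.
have IG := ident_G (fun j => hx x1 j - hx x0 j) (fun j => hy x1 j - hy x0 j) (hat p) (dH q (Hzero n)).
have IH := ident_H (fun j => hx x1 j - hx x0 j) (fun j => hy x1 j - hy x0 j) (hat p) (dH q (Hzero n)).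
have BE := bound_E x0 x1 q (hat p) (hat q) _ (Rlt_le _ _ hNq) rqx rqy.
have BD := bound_Dn (fun j => hx x1 j - hx x0 j) (fun j => hy x1 j - hy x0 j) (hat p) _ (Rlt_le _ _ hNq).
cbv beta in IG, IH, BD.
have hIP := ip_bound (hx (hat p)) (hy (hat p))
   (fun j => hx x1 j - hx x0 j - dH q (Hzero n) * hx (hat p) j)
   (fun j => hy x1 j - hy x0 j - dH q (Hzero n) * hy (hat p) j).
have hIM := im_bound (fun j => hx x1 j - hx x0 j - dH q (Hzero n) * hx (hat p) j)
   (fun j => hy x1 j - hy x0 j - dH q (Hzero n) * hy (hat p) j) (hx (hat p)) (hy (hat p)).
have hIX := ip_bound (hx x0) (hy x0) (fun j => hx x1 j - hx x0 j) (fun j => hy x1 j - hy x0 j).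
rewrite -/(nz (hat p)) in hIP hIM. rewrite -/(nz x0) in hIX.
have hDn2 := nrm_sq (fun j => hx x1 j - hx x0 j) (fun j => hy x1 j - hy x0 j).
set Np := dH p (Hzero n) in IA IT hNpl hNpu hNp0 hNp *.
set Nq := dH q (Hzero n) in IG IH BE BD hIP hIM hNql hNqu hNq0 hNq1 hNq2 hNq *.
set Dn := nrm (fun j => hx x1 j - hx x0 j) (fun j => hy x1 j - hy x0 j) in BD hIX hDn2 *.
set E := nrm (fun j => hx x1 j - hx x0 j - Nq * hx (hat p) j)
   (fun j => hy x1 j - hy x0 j - Nq * hy (hat p) j) in BE BD hIP hIM *.
set G := ip (hx (hat p)) (hy (hat p)) (fun j => hx x1 j - hx x0 j) (fun j => hy x1 j - hy x0 j) in IA IG *.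
set H := im (fun j => hx x1 j - hx x0 j) (fun j => hy x1 j - hy x0 j) (hx (hat p)) (hy (hat p)) in IT IH *.
set X := ip (hx x0) (hy x0) (fun j => hx x1 j - hx x0 j) (fun j => hy x1 j - hy x0 j) in IA hIX *.
set T0 := ht x0 + - ht p + / 2 * ImH x0 (Hinv p) in eq0 *.
have hT0 : Rabs T0 <= r ^ 2.
  apply: sq_le_abs; first by nra.
  have : 0 <= nzd x0 p ^ 2 * r ^ 2 by apply: Rmult_le_pos; apply: pow2_ge_0.
  rewrite pow22. lra.
have hnx1 : nz x1 <= 2 * t + Nq.
  have := nz_le x1 q. rewrite nzd_sym. lra.
have hIq := ImH_bound q x1.
have hprod : nz q * nz x1 <= Nq * (2 * t + Nq).
  apply: Rmult_le_compat; [apply: nrm_ge0|apply: nrm_ge0|lra|lra].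
have hDt : Rabs (ht x1 - ht x0) <= Nq ^ 2 + 8 * t ^ 2 + / 2 * Nq * (Nq + 2 * t).
  move/abs_le: hTq1 => a1. move/abs_le: hIq => a2. move/abs_le: hNq2 => a3. move/abs_le: hhx0 => a4.
  apply: Rabs_le. lra.
have hE : E <= 4 * t + Nq * nzd (hat p) (hat q) by lra.
have hE0 : 0 <= E by apply: nrm_ge0.
have hG : Nq * c2 - E <= G.
  rewrite IG. move/abs_le: hIP => a1.
  have : Nq * c2 <= Nq * nz (hat p) ^ 2 by apply: Rmult_le_compat_l; lra.
  have : nz (hat p) * E <= E by nra.
  lra.
have hH : Rabs H <= E.
  rewrite IH. have : E * nz (hat p) <= E by nra. lra.
have hDn0 : 0 <= Dn by apply: nrm_ge0.
have hDn : Dn <= Nq + E.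
  have : Nq * nz (hat p) <= Nq by nra. lra.
have hX : Rabs X <= 2 * t * Dn.
  have : nz x0 * Dn <= 2 * t * Dn by apply: Rmult_le_compat_r; lra.
  lra.
have eqF := alg_eq r _ _ T0 _ X Np G _ Dn H _ _ (ht x0) (ht x1) (ht p) eq0 eq1 IA hDn2 IT
  (erefl _) (erefl _).
apply: (final_ineq r Np Nq t E Dn G H X T0 (ht x1 - ht x0) c2 (nzd (hat p) (hat q))) => //.
- lra.
- have : c2 * rt <= c2 * (2 * Nq) by apply: Rmult_le_compat_l; lra.
  lra.
- lra.
Qed.
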